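(* Let $n\ge d\ge1$ and suppose $P\subseteq\mathbb{R}^d$ is a grid set of size $\binom{n}{d}$. Then for every compact convex set $C\subseteq\mathbb{R}^d$, \[ |\partial C\cap P|\le 2\binom{n}{d-1}. \]
   Context: A set $P\subseteq\mathbb{R}^d$ of size $\binom{n}{d}$ is a grid set if there exist $n$ hyperplanes in $\mathbb{R}^d$ such that $P$ is exactly the set of points obtained as intersections of $d$ of these hyperplanes (each $d$-subset of the hyperplanes meeting in a single point, these points being distinct). $\partial C$ denotes the boundary of $C$ in $\mathbb{R}^d$. *)

(* Defs.v *)
From HB Require Import structures.
From mathcomp Require Import all_boot all_order all_algebra.
From mathcomp Require Import all_classical all_reals all_analysis.
Set Implicit Arguments. Unset Strict Implicit. Unset Printing Implicit Defensive.
Import Order.TTheory GRing.Theory Num.Theory numFieldNormedType.Exports.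
Local Open Scope classical_set_scope.
Local Open Scope ring_scope.

Definition dotv (R : realType) (d : nat) (u v : 'rV[R]_d) : R :=
  \sum_(i < d) u ord0 i * v ord0 i.

Definition on_hyperplane (R : realType) (d : nat) (a : 'rV[R]_d) (b : R)
  (x : 'rV[R]_d) : Prop := dotv a x = b.

(* P is a grid set for n hyperplanes {x | <a i, x> = b i} (a i <> 0):
   every d-subset S of the hyperplanes meets in exactly one point, the points
   for distinct d-subsets are distinct, and P is exactly the set of these
   points.  (Hence #P = 'C(n, d).) *)
Definition grid_set (R : realType) (d n : nat) (P : set 'rV[R]_d) : Prop :=
  exists (a : 'I_n -> 'rV[R]_d) (b : 'I_n -> R),
    [/\ (forall i, a i != 0),
        (forall S : {set 'I_n}, #|S| = d ->
           exists! x, forall i, i \in S -> on_hyperplane (a i) (b i) x),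
        (forall (S T : {set 'I_n}) x, #|S| = d -> #|T| = d ->
           (forall i, i \in S -> on_hyperplane (a i) (b i) x) ->
           (forall i, i \in T -> on_hyperplane (a i) (b i) x) -> S = T) &
        P = [set x | exists S : {set 'I_n}, #|S| = d /\
               (forall i, i \in S -> on_hyperplane (a i) (b i) x)]].

Definition convex (R : realType) (d : nat) (C : set 'rV[R]_d) : Prop :=
  forall x y (t : R), C x -> C y -> 0 <= t -> t <= 1 ->
    C (t *: x + (1 - t) *: y).

Definition bdry (R : realType) (d : nat) (C : set 'rV[R]_d) : set 'rV[R]_d :=
  closure C `\` interior C.

(* Main.v *)
Require Import Defs.
From HB Require Import structures.
From mathcomp Require Import all_boot all_order all_algebra.
From mathcomp Require Import all_classical all_reals all_analysis.
From mathcomp Require Import ring lra.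
Import Order.TTheory GRing.Theory Num.Theory numFieldNormedType.Exports.
Local Open Scope classical_set_scope.
Local Open Scope ring_scope.

Section Helpers.
Variables (R : realType) (d : nat).
Implicit Types (a u v w x y z p q : 'rV[R]_d).

Lemma dotvD a u v : dotv a (u + v) = dotv a u + dotv a v.
Proof. by rewrite /dotv -big_split; apply: eq_bigr => i _; rewrite mxE mulrDr. Qed.
Lemma dotvZ a (c : R) u : dotv a (c *: u) = c * dotv a u.
Proof. by rewrite /dotv mulr_sumr; apply: eq_bigr => i _; rewrite mxE mulrCA. Qed.
Lemma dotvN a u : dotv a (- u) = - dotv a u.
Proof. by rewrite -scaleN1r dotvZ mulN1r. Qed.
Lemma dotvB a u v : dotv a (u - v) = dotv a u - dotv a v.
Proof. by rewrite dotvD dotvN. Qed.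
Lemma dotv0 a : dotv a 0 = 0.
Proof. by rewrite /dotv big1 // => i _; rewrite mxE mulr0. Qed.
Lemma dotv_sum a (I : finType) (S : {pred I}) (F : I -> 'rV[R]_d) :
  dotv a (\sum_(i in S) F i) = \sum_(i in S) dotv a (F i).
Proof.
rewrite /dotv exchange_big /=; apply: eq_bigr => k _.
by rewrite summxE mulr_sumr.
Qed.

Lemma entry_le v k : `|v ord0 k| <= `|v|.
Proof.
rewrite [X in _ <= X]/Num.norm /= mx_normrE.
exact: (le_bigmax _ (fun ij : 'I_1 * 'I_d => `|v ij.1 ij.2|) (ord0, k)).
Qed.

Lemma dotv_bound a v : `|dotv a v| <= (\sum_k `|a ord0 k|) * `|v|.
Proof.
rewrite /dotv mulr_suml; apply: le_trans (ler_norm_sum _ _ _) _.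
apply: ler_sum => k _; rewrite normrM; apply: ler_wpM2l => //.
exact: entry_le.
Qed.

Variable C : set 'rV[R]_d.
Hypothesis cC : convex C.

Lemma seg q w t : C q -> C (q + w) -> 0 <= t -> t <= 1 -> C (q + t *: w).
Proof.
move=> Cq Cqw t0 t1.
have := cC (q + w) q t Cqw Cq t0 t1.
congr C; apply/rowP => k; rewrite !mxE; ring.
Qed.

Lemma avg (l : seq 'rV[R]_d) : (forall x, x \in l -> C x) -> (0 < size l)%N ->
  C ((size l)%:R^-1 *: \sum_(x <- l) x).
Proof.
elim: l => [//|x l IH] Hl _.
move: IH Hl; case: l => [|y l] IH Hl.
  rewrite big_cons big_nil addr0 /= invr1 scale1r; apply: Hl; exact: mem_head.
set l' := y :: l.
have Cl : C ((size l')%:R^-1 *: \sum_(x <- l') x).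
  by apply: IH => // z zl; apply: Hl; rewrite inE zl orbT.
have Cx : C x by apply: Hl; exact: mem_head.
have -> : size (x :: l') = (size l').+1 by [].
rewrite big_cons; move: Cl.
have m0 : (0 < size l')%N by [].
move: (size l') m0 (\sum_(x <- l') x) => m m0 S Cl.
have t0 : 0 <= (m.+1%:R)^-1 :> R by rewrite invr_ge0.
have t1 : (m.+1%:R)^-1 <= 1 :> R by rewrite invf_le1 // ler1n.
have := cC _ _ _ Cx Cl t0 t1.
have mR : (m%:R : R) != 0 by rewrite pnatr_eq0 -lt0n.
have m1R : (m%:R + 1 : R) != 0 by rewrite natr1 pnatr_eq0.
congr C; apply/rowP => k; rewrite !mxE /= -natr1.
by field; rewrite m1R mR.
Qed.

Variables (n : nat) (a : 'I_n -> 'rV[R]_d) (b : 'I_n -> R).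

Definition sat (S : {set 'I_n}) x := forall i, i \in S -> dotv (a i) x = b i.
Definition NE q (T : {set 'I_n}) := exists w, w != 0 /\
  (forall j, j \in T -> dotv (a j) w = 0) /\ C (q + w) /\ C (q - w).

Lemma kerS S p : sat S p -> (forall x, sat S x -> x = p) ->
  forall r, (forall i, i \in S -> dotv (a i) r = 0) -> r = 0.
Proof.
move=> sp u r hr.
have : sat S (p + r) by move=> i iS; rewrite dotvD hr // addr0 sp.
by move/u => h; rewrite -(addKr p r) h addNr.
Qed.

Lemma NE2 q w (al be : R) (T : {set 'I_n}) : C q -> C (q + al *: w) -> C (q - be *: w) ->
  0 < al -> 0 < be -> w != 0 -> (forall j, j \in T -> dotv (a j) w = 0) ->
  NE q T.
Proof.
move=> Cq Ca Cb al0 be0 w0 kw.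
pose m := Num.min al be.
have m0 : 0 < m by rewrite lt_min al0 be0.
have mal : m <= al by rewrite ge_min lexx.
have mbe : m <= be by rewrite ge_min lexx orbT.
exists (m *: w); split; first by rewrite scaler_eq0 negb_or w0 andbT gt_eqF.
split; first by move=> j jT; rewrite dotvZ kw // mulr0.
have al1 : al != 0 by rewrite gt_eqF.
have be1 : be != 0 by rewrite gt_eqF.
split.
  have := seg _ _ (m / al) Cq Ca (divr_ge0 (ltW m0) (ltW al0)).
  rewrite ler_pdivrMr // mul1r => /(_ mal).
  by congr C; apply/rowP => k; rewrite !mxE; field.
have := seg _ _ (m / be) Cq Cb (divr_ge0 (ltW m0) (ltW be0)).
rewrite ler_pdivrMr // mul1r => /(_ mbe).
by congr C; apply/rowP => k; rewrite !mxE; field.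
Qed.


Lemma three (T : {set 'I_n}) k x y z :
  (forall r, (forall j, j \in T -> dotv (a j) r = 0) -> dotv (a k) r = 0 -> r = 0) ->
  sat T x -> sat T y -> sat T z -> C x -> C y -> C z ->
  x != y -> x != z -> y != z -> NE x T \/ NE y T \/ NE z T.
Proof.
move=> hk xT yT zT Cx Cy Cz xy xz yz.
pose u := y - x; pose v := z - x.
have ku : forall j, j \in T -> dotv (a j) u = 0.
  by move=> j jT; rewrite dotvB xT // yT // subrr.
have kv : forall j, j \in T -> dotv (a j) v = 0.
  by move=> j jT; rewrite dotvB xT // zT // subrr.
have u0 : u != 0 by rewrite subr_eq0 eq_sym.
pose al := dotv (a k) u.
have al0 : al != 0.
  by apply: contra u0 => /eqP h; apply/eqP; apply: hk.
pose rho := dotv (a k) v / al.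
have hv : v = rho *: u.
  apply/eqP; rewrite -subr_eq0; apply/eqP; apply: hk.
    by move=> j jT; rewrite dotvB dotvZ ku // kv // mulr0 subrr.
  by rewrite dotvB dotvZ /rho -/al divfK // subrr.
have ey : y = x + u by rewrite /u addrC subrK.
have ez : z = x + rho *: u by rewrite -hv /v addrC subrK.
case: (ltrgtP rho 1) => [r1|r1|r1]; last first.
- by move: yz; rewrite ey ez r1 scale1r eqxx.
- right; left; apply: (NE2 _ u (rho - 1) (1)) => //.
  + by move: Cz; rewrite ey ez; congr C; apply/rowP => i; rewrite !mxE; ring.
  + by move: Cx; rewrite ey; congr C; apply/rowP => i; rewrite !mxE; ring.
  + by rewrite subr_gt0.
case: (ltrgtP rho 0) => [r0|r0|r0]; last first.
- by move: xz; rewrite ez r0 scale0r addr0 eqxx.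
- right; right; apply: (NE2 _ u (1 - rho) (rho)) => //.
  + by move: Cy; rewrite ey ez; congr C; apply/rowP => i; rewrite !mxE; ring.
  + by move: Cx; rewrite ez; congr C; apply/rowP => i; rewrite !mxE; ring.
  + by rewrite subr_gt0.
- left; apply: (NE2 _ u (1) (- rho)) => //.
  + by move: Cy; rewrite ey; congr C; apply/rowP => i; rewrite !mxE; ring.
  + by move: Cz; rewrite ez; congr C; apply/rowP => i; rewrite !mxE; ring.
  + by rewrite oppr_gt0.
Qed.


Lemma interior_of (S : {set 'I_n}) p : (0 < d)%N -> #|S| = d -> sat S p ->
  (forall x, sat S x -> x = p) -> (forall i, i \in S -> NE p (S :\ i)) ->
  nbhs p C.
Proof.
move=> dpos hS sp u H.
have hex : forall i, exists w, i \in S -> w != 0 /\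
  (forall j, j \in S :\ i -> dotv (a j) w = 0) /\ C (p + w) /\ C (p - w).
  move=> i; case: (boolP (i \in S)) => iS.
    by have [w hw] := H i iS; exists w.
  by exists 0.
have [W HW] := choice hex.
have ker := kerS _ _ sp u.
pose lam i := dotv (a i) (W i).
have lam0 : forall i, i \in S -> lam i != 0.
  move=> i iS; apply/negP => /eqP l0.
  have [W0 [HWk _]] := HW i iS.
  move/negP: W0; apply; apply/eqP; apply: ker => j jS.
  case: (eqVneq j i) => [->//|ji].
  by apply: HWk; rewrite !inE ji jS.
have [i0 i0S] : exists i0, i0 \in S by apply/card_gt0P; rewrite hS.
have Cp : C p.
  have [_ [_ [C1 C2]]] := HW _ i0S.
  have h0 : 0 <= 2^-1 :> R by rewrite invr_ge0.
  have h1 : 2^-1 <= 1 :> R by rewrite invf_le1 // ler1n.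
  have := cC _ _ _ C1 C2 h0 h1.
  by congr C; apply/rowP => k; rewrite !mxE; field.
pose M i := \sum_k `|a i ord0 k|.
pose K := \sum_(i in S) (d%:R * M i / `|lam i|).
have tge0 : forall i, 0 <= d%:R * M i / `|lam i|.
  move=> i; apply: divr_ge0 => //; apply: mulr_ge0 => //.
  by apply: sumr_ge0.
have K0 : 0 <= K by apply: sumr_ge0.
have Kle : forall i, i \in S -> d%:R * M i / `|lam i| <= K.
  move=> i iS; rewrite /K (bigD1 i) //= lerDl.
  by apply: sumr_ge0.
apply/nbhs_ballP; exists (1 + K)^-1.
  by rewrite /= invr_gt0; lra.
move=> z; rewrite -ball_normE /= => hz.
pose v := z - p.
have nv : `|v| < (1 + K)^-1 by rewrite /v -normrN opprB.
pose c i := dotv (a i) v / lam i.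
have dec : v = \sum_(i in S) c i *: W i.
  apply/eqP; rewrite -subr_eq0; apply/eqP; apply: ker => j jS.
  rewrite dotvB dotv_sum (bigD1 j) //= big1 ?addr0.
  - by rewrite dotvZ /c -/(lam j) divfK ?subrr //; exact: lam0.
  - move=> i /andP[iS ij]; rewrite dotvZ.
    have [_ [HWk _]] := HW i iS.
    by rewrite HWk ?mulr0 // !inE eq_sym ij jS.
have Cq : forall i, i \in S -> C (p + (d%:R * c i) *: W i).
  move=> i iS; have [W0 [_ [Cp1 Cp2]]] := HW i iS.
  have bnd : `|d%:R * c i| <= 1.
    have L0 : 0 < `|lam i| by rewrite normr_gt0 lam0.
    rewrite normrM normr_nat /c normrM normfV mulrA ler_pdivrMr // mul1r.
    have hA := dotv_bound (a i) v.
    have e1 := ler_wpM2l (ler0n _ d) hA.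
    have e2 : d%:R * M i = (d%:R * M i / `|lam i|) * `|lam i| by rewrite divfK // gt_eqF.
    have e3 := ler_wpM2r (normr_ge0 v) (Kle i iS).
    have e4 : `|v| * (1 + K) < 1.
      by rewrite -ltr_pdivlMr ?mul1r //; lra.
    move: e1 e2 e3 e4 L0 K0; rewrite -/(M i).
    move: (d%:R * M i / `|lam i|) => X.
    have := normr_ge0 v; have := normr_ge0 (dotv (a i) v).
    move: `|v| `|dotv (a i) v| `|lam i| => V A L.
    move=> *; nra.
  case: (lerP 0 (d%:R * c i)) => t0.
    apply: seg => //; apply: le_trans bnd; exact: ler_norm.
  have := seg _ _ (- (d%:R * c i)) Cp Cp2.
  rewrite oppr_ge0 (ltW t0) => /(_ isT).
  have : - (d%:R * c i) <= 1 by apply: le_trans bnd; rewrite -normrN; exact: ler_norm.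
  move=> h /(_ h).
  by congr C; apply/rowP => k; rewrite !mxE; ring.
have := avg [seq p + (d%:R * c i) *: W i | i <- enum S].
rewrite size_map -cardE hS => /(_ _ dpos).
have hx : forall x, x \in [seq p + (d%:R * c i) *: W i | i <- enum S] -> C x.
  by move=> x /mapP [i]; rewrite mem_enum => iS ->; exact: Cq.
move=> /(_ hx).
rewrite big_map big_enum /= big_split /= sumr_const hS.
have -> : \sum_(i in S) (d%:R * c i) *: W i = d%:R *: v.
  by rewrite dec scaler_sumr; apply: eq_bigr => i _; rewrite scalerA.
have dR : (d%:R : R) != 0 by rewrite pnatr_eq0 -lt0n.

congr C; apply/rowP => k; rewrite !mxE mulmxnE -[p 0 k *+ d]mulr_natr.
  by field.
Qed.

End Helpers.
Arguments sat {R d n} a b S x.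
Arguments NE {R d} C {n} a q T.

Lemma count_bound (X : eqType) (Y : finType) (s : seq X) (f : X -> Y) (D : {set Y}) :
  (forall x, x \in s -> f x \in D) ->
  (forall y, (count (fun x => f x == y) s <= 2)%N) -> (size s <= 2 * #|D|)%N.
Proof.
move=> H H2.
have -> : size s = (\sum_(y in D) count (fun x => f x == y) s)%N.
  elim: s H {H2} => [|x s IH] H; first by rewrite big1.
  rewrite /= big_split /= -IH; last by move=> z zs; apply: H; rewrite inE zs orbT.
  rewrite (bigD1 (f x)) ?H ?mem_head //= eqxx big1 // => y /andP[_ hy].
  by rewrite eq_sym (negbTE hy).
apply: (@leq_trans (\sum_(y in D) 2)%N); first exact: leq_sum.
by rewrite sum_nat_const mulnC.
Qed.

Theorem lemma8 (R : realType) (n d : nat) (P : set 'rV[R]_d) :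
  (1 <= d)%N -> (d <= n)%N -> grid_set n P ->
  forall C : set 'rV[R]_d, compact C -> convex C ->
  forall s : seq 'rV[R]_d, uniq s ->
    (forall x, x \in s -> (bdry C `&` P) x) ->
    (size s <= 2 * 'C(n, d.-1))%N.
Proof.
move=> d1 dn [a [b [_ Hu _ HP]]] C cpt cC s us Hs.
have cl : C = closure C by apply/closure_id; exact: compact_closed.
pose good (p : 'rV[R]_d) (T : {set 'I_n}) := exists (S : {set 'I_n}) (i : 'I_n), #|S| = d /\ i \in S /\ T = S :\ i /\
  sat a b S p /\ (forall y, sat a b S y -> y = p) /\ ~ NE C a p T.
have hgood : forall p, p \in s -> exists T, good p T.
  move=> p ps; have [[clp nint] Pp] := Hs p ps.
  rewrite HP in Pp; have [S [hS sS]] := Pp.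
  have uS : forall y, sat a b S y -> y = p.
    have [x0 [_ hx0]] := Hu S hS.
    by move=> y sy; rewrite -(hx0 y sy) (hx0 p sS).
  case: (pselect (exists i, i \in S /\ ~ NE C a p (S :\ i))) => [[i [iS hi]]|hn].
    by exists (S :\ i), S, i.
  exfalso; apply: nint.
  apply: (interior_of _ _ _ cC _ _ _ _ _ d1 hS sS uS) => i iS.
  by apply: contrapT => hne; apply: hn; exists i.
have hex : forall p, exists T, p \in s -> good p T.
  move=> p; case: (boolP (p \in s)) => ps; last by exists (finset pred0).
  by have [T hT] := hgood p ps; exists T.
have [f hf] := choice hex.
apply: (@leq_trans (2 * #|finset (fun T : {set 'I_n} => #|T| == d.-1)|)%N); last first.
  by rewrite card_draws card_ord.
apply: (@count_bound _ _ s f).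
  move=> p ps; rewrite inE.
  have [S [i [hS [iS [-> _]]]]] := hf p ps.
  by rewrite (cardsD1 i S) iS in hS; rewrite -hS add1n /=.
move=> T; rewrite leqNgt; apply/negP => h3.
set l := seq.filter (fun x => f x == T) s.
have ul : uniq l := filter_uniq _ us.
have h3' : (2 < size l)%N by rewrite size_filter.
have mem : forall k, (k < size l)%N -> nth 0 l k \in s /\ f (nth 0 l k) = T.
  by move=> k hk; have := mem_nth 0 hk; rewrite mem_filter => /andP[/eqP ? ?].
have gT : forall k, (k < size l)%N -> sat a b T (nth 0 l k) /\ ~ NE C a (nth 0 l k) T
    /\ C (nth 0 l k).
  move=> k hk; have [ys fy] := mem k hk.
  have [S' [i' [_ [_ [eT' [sy [_ ny]]]]]]] := hf _ ys; rewrite fy in eT' ny.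
  split; first by move=> j; rewrite eT' !inE => /andP[_ jS]; apply: sy.
  split=> //; have [[cly _] _] := Hs _ ys; by rewrite cl.
have h0 : (0 < size l)%N by apply: leq_trans h3'.
have h1 : (1 < size l)%N by apply: leq_trans h3'.
have [xs fx] := mem 0%N h0.
have [S [i [hS [iS [eT [sx [ux nx]]]]]]] := hf _ xs; rewrite fx in eT nx.
have hk : forall r, (forall j, j \in T -> dotv (a j) r = 0) -> dotv (a i) r = 0 -> r = 0.
  move=> r hr hi; apply: (@kerS _ _ _ a b S _ sx ux) => j jS.
  by case: (eqVneq j i) => [->//|ji]; apply: hr; rewrite eT !inE ji jS.
have [xT [_ Cx]] := gT 0%N h0.
have [yT [ny Cy]] := gT 1%N h1.
have [zT [nz Cz]] := gT 2%N h3'.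
have xy : nth 0 l 0 != nth 0 l 1 by rewrite nth_uniq.
have xz : nth 0 l 0 != nth 0 l 2 by rewrite nth_uniq.
have yz : nth 0 l 1 != nth 0 l 2 by rewrite nth_uniq.
by case: (three _ _ _ cC _ _ _ T i _ _ _ hk xT yT zT Cx Cy Cz xy xz yz) => [|[|]].
Qed.
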